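(* Let $n\geq 2$ and write $p_{n+1} = k_n d_n + r_n$ with integers $k_n\ge 0$ and $1\leq r_n < d_n$ (division of $p_{n+1}$ by $d_n$). Each of the following statements is equivalent to $d_n^2 < 2p_{n+1}$: 1. The number of odd positive integers $m\le p_n$ with $m\,p_{n+1} > p_n^2$ equals $d_n/2$; that is, the smallest odd multiple of $p_{n+1}$ greater than $p_n^2$ is $(p_n - (d_n-2))\,p_{n+1}$. 2. $(d_n-2)\,p_{n+1}$ is the largest even multiple of $p_{n+1}$ that is at most $d_n p_n$. 3. $k_n \geq d_n/2$.
   Context: $p_n$ denotes the $n$th prime ($p_1=2$) and $d_n := p_{n+1}-p_n$. *)

(* Defs.v *)
From mathcomp Require Import all_boot.
Set Implicit Arguments. Unset Strict Implicit. Unset Printing Implicit Defensive.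

Definition next_prime (m : nat) : nat :=
  ex_minn (let: exist2 p Hlt Hp := prime_above m in
           ex_intro (fun q => (m < q) && prime q) p (introT andP (conj Hlt Hp))).

(* p_ n = n-th prime, 1-indexed: p_ 1 = 2, p_ 2 = 3, ... (p_ 0 = 2 is junk) *)
Definition p_ (n : nat) : nat := iter n.-1 next_prime 2.

Definition d_ (n : nat) : nat := p_ n.+1 - p_ n.

(* Main.v *)
Require Import Defs.
From mathcomp Require Import all_boot zify.

Lemma next_primeP m : m < next_prime m /\ prime (next_prime m).
Proof.
rewrite /next_prime; case: ex_minnP => q /andP [H1 H2] _; by split.
Qed.

Lemma p_prime n : prime (p_ n).
Proof.
rewrite /p_; case: n => [|n] //=; elim: n => [|n IH] //=.
exact: (next_primeP _).2.
Qed.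

Lemma p_facts n : 2 <= n -> [/\ odd (p_ n), odd (p_ n.+1) & p_ n < p_ n.+1].
Proof.
case: n => [|[|n]] // _.
have E1 : p_ n.+3 = next_prime (p_ n.+2) by [].
have E2 : p_ n.+2 = next_prime (p_ n.+1) by [].
have H1 := prime_gt1 (p_prime n.+1).
have [H2 _] := next_primeP (p_ n.+1).
have [H3 _] := next_primeP (p_ n.+2).
rewrite -E2 in H2; rewrite -E1 in H3.
have odd_of m : prime m -> 2 < m -> odd m.
  by move=> pm lt; case: (even_prime pm) => // E; rewrite E in lt.
split => //; apply: odd_of; try exact: p_prime; lia.
Qed.

Lemma count_odd_ge c N :
  count (fun m => odd m && (c <= m)) (iota 0 N) = N %/ 2 - c %/ 2.
Proof.
elim: N => [|N IH]; first by rewrite div0n.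
rewrite -addn1 iotaD count_cat IH /= add0n addn0.
have := modn2 N; case: (odd N) => /= h; case: (leqP c N) => /= hc; lia.
Qed.

Lemma cnt0 (p : pred nat) N : p 0 = false -> count p (iota 1 N) = count p (iota 0 N.+1).
Proof. by move=> h; rewrite /= h. Qed.

Lemma core (P Q k r : nat) : odd P -> odd Q -> P < Q ->
  Q = k * (Q - P) + r -> 1 <= r < Q - P ->
  let d := Q - P in
  ((d ^ 2 < 2 * Q) <->
     count (fun m => odd m && (P ^ 2 < m * Q)) (iota 1 P) = d %/ 2) /\
  ((d ^ 2 < 2 * Q) <->
     [/\ odd (P - (d - 2)), P ^ 2 < (P - (d - 2)) * Q &
         forall m, odd m -> P ^ 2 < m * Q -> (P - (d - 2)) * Q <= m * Q]) /\
  ((d ^ 2 < 2 * Q) <->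
     [/\ ~~ odd (d - 2), (d - 2) * Q <= d * P &
         forall m, ~~ odd m -> m * Q <= d * P -> m * Q <= (d - 2) * Q]) /\
  ((d ^ 2 < 2 * Q) <-> d %/ 2 <= k).
Proof.
move=> oP oQ lt hk hr d.
have [c Pc] : exists c, P = 2*c+1 by exists (P %/ 2); have := modn2 P; rewrite oP; lia.
have [e Qe] : exists e, Q = 2*e+1 by exists (Q %/ 2); have := modn2 Q; rewrite oQ; lia.
have [b [db b1 Qb]] : exists b, [/\ d = 2 * b, 1 <= b & Q = P + 2 * b] by exists (e - c); rewrite /d; split; lia.
have dE : Q - P = 2 * b by rewrite -db.
subst d; rewrite {}dE in hk hr *.
rewrite -!mulnn.
have oddE m : odd m = (m %% 2 == 1) by rewrite modn2; case: (odd m).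
clear db Qe e; case: b b1 hk hr Qb => // b _ hk hr Qb.
have -> : 2 * b.+1 - 2 = 2 * b by lia.
move: hk lt oQ; subst P Q => hk lt oQ.
split; [|split; [|split]].
- set Q := 2 * c + 1 + 2 * b.+1.
  rewrite cnt0 //.
  split.
    move=> h.
    rewrite (@eq_count _ _ (fun m => odd m && (2 * c + 1 - 2 * b <= m))); last first.
      move=> m /=; case om: (odd m) => //=.
      apply/idP/idP => hm.
        case: (leqP (2 * c + 1 - 2 * b) m) => // hlt.
        have h1 : m + 2 * b + 2 <= 2 * c + 1 by move: om; rewrite oddE; lia.
        have := leq_mul h1 (leqnn Q). rewrite /Q in hm *; lia.
      have h1 : 2 * c + 1 <= m + 2 * b by lia.
      have := leq_mul h1 (leqnn Q). rewrite /Q in h *; lia.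
    rewrite count_odd_ge; lia.
  move=> hc; case: (leqP (2 * Q) (2 * b.+1 * (2 * b.+1))) => // hn.
  have := @sub_count _ (fun m => odd m && ((2 * c + 1) * (2 * c + 1) < m * Q))
     (fun m => odd m && (2 * c + 2 - 2 * b <= m)) _ (iota 0 (2 * c + 1).+1).
  rewrite hc count_odd_ge.
  have hq : 2 * c + 2 - 2 * b <= 2 * c + 2 by lia.
  move=> /(_ _) H; suff : (2 * b.+1) %/ 2 <= (2 * c + 1).+1 %/ 2 - (2 * c + 2 - 2 * b) %/ 2 by lia.
  apply: H => m /andP [om hm]; rewrite om /=.
  case: (leqP (2 * c + 2 - 2 * b) m) => // hlt.
  have h1 : m + 2 * b <= 2 * c + 1 by lia.
  have := leq_mul h1 (leqnn Q). rewrite /Q in hm hn *; lia.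
- split.
    move=> h. have bc : b <= c.
      case: (leqP b c) => // hbc.
      have : (c+1)*(c+1) <= b * b by apply: leq_mul; lia.
      lia.
    have [a ea] : exists a, c = a + b by exists (c - b); lia.
    subst c.
    have -> : 2 * (a + b) + 1 - 2 * b = 2 * a + 1 by lia.
    split; first by rewrite oddE; lia.
      lia.
    move=> m om hm; apply: leq_mul => //.
    case: (leqP (2 * a + 1) m) => // hma.
    have hm2 : m + 2 <= 2 * a + 1 by move: om; rewrite oddE; lia.
    have := leq_mul hm2 (leqnn (2 * (a + b) + 1 + 2 * b.+1)).
    lia.
  case=> o1 h2 _.
  have bc : b <= c by case: (leqP b c) => // hbc; move: o1; have -> : 2 * c + 1 - 2 * b = 0 by lia.
  have [a ea] : exists a, c = a + b by exists (c - b); lia.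
  subst c.
  have e2 : 2 * (a + b) + 1 - 2 * b = 2 * a + 1 by lia.
  rewrite e2 in h2.
  lia.
- split.
    move=> h; split; first by rewrite oddE; lia.
      nia.
    move=> m om hm; apply: leq_mul => //.
    case: (leqP (2 * b.+1) m) => hmb.
      have : 2 * b.+1 * (2 * c + 1 + 2 * b.+1) <= m * (2 * c + 1 + 2 * b.+1) by apply: leq_mul.
      nia.
    move: om; rewrite oddE; lia.
  case=> _ h2 _; nia.
- split.
    move=> h. case: (leqP b.+1 k) => hkb; first lia.
    have : k * (2 * b.+1) <= b * (2 * b.+1) by apply: leq_mul; lia.
    nia.
  move=> h. nia.
Qed.

Theorem theorem1p6 (n k r : nat) :
  2 <= n ->
  p_ n.+1 = k * d_ n + r -> 1 <= r < d_ n ->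
  let P := p_ n in let Q := p_ n.+1 in let d := d_ n in
  (* 1 (count form) *)
  ((d ^ 2 < 2 * Q) <->
     count (fun m => odd m && (P ^ 2 < m * Q)) (iota 1 P) = d %/ 2) /\
  (* 1 (smallest odd multiple form) *)
  ((d ^ 2 < 2 * Q) <->
     [/\ odd (P - (d - 2)), P ^ 2 < (P - (d - 2)) * Q &
         forall m, odd m -> P ^ 2 < m * Q -> (P - (d - 2)) * Q <= m * Q]) /\
  (* 2 *)
  ((d ^ 2 < 2 * Q) <->
     [/\ ~~ odd (d - 2), (d - 2) * Q <= d * P &
         forall m, ~~ odd m -> m * Q <= d * P -> m * Q <= (d - 2) * Q]) /\
  (* 3 *)
  ((d ^ 2 < 2 * Q) <-> d %/ 2 <= k).
Proof.
move=> hn hk hr.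
have [oP oQ lt] := @p_facts n hn.
exact (@core _ _ k r oP oQ lt hk hr).
Qed.
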